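(* Let $n=2m+2$, $\omega=\exp(2\pi i/n)$, and let $S$ and $C$ be real $n\times n$ circulant matrices with first rows $(s_1,\ldots,s_n)$ and $(c_1,\ldots,c_n)$ such that $S$, $S+C$ and $S-C$ are entrywise nonnegative. Let $\sigma_1=(\lambda_1,\ldots,\lambda_n)$ and $\sigma_2=(\beta_1,\ldots,\beta_n)$ be their ordered spectra, $\lambda_k=\sum_{j=1}^n s_j\omega^{(k-1)(j-1)}$ and $\beta_k=\sum_{j=1}^n c_j\omega^{(k-1)(j-1)}$ (so $\sigma_1=(\lambda_1,\lambda_2,\lambda_3,\ldots,\overline{\lambda}_3,\overline{\lambda}_2)$ and similarly for $\sigma_2$). Let $t_1,t_2$ be real numbers with $t_1\ge|t_2|$ and fix a sign $\epsilon\in\{+1,-1\}$. Define $$\sigma_{s,t_1}=(\lambda_1+t_1,\lambda_2,\ldots,\lambda_{m+1},\lambda_{m+2}+\epsilon t_1,\lambda_{m+3},\ldots,\lambda_n),$$ $$\sigma_{c,t_2}=(\beta_1+t_2,\beta_2,\ldots,\beta_{m+1},\beta_{m+2}+\epsilon t_2,\beta_{m+3},\ldots,\beta_n).$$ Then there exists a nonnegative permutative $2n\times 2n$ matrix $M$ whose spectrum (counted with multiplicities) is the concatenated list $\sigma_{s,t_1}\cup\sigma_{c,t_2}$.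
   Context: A circulant matrix with first row $(r_1,\ldots,r_n)$ is the matrix whose $i$-th row is the first row cyclically shifted $i-1$ positions to the right. A matrix is permutative if each of its rows is a permutation of its first row (more precisely, it equals $\tau(\mathbf a)$ for some $\mathbf a$ and some $n$-tuple of permutations $\tau$ with $\tau_1=\mathrm{id}$, the $j$-th row being $(a_{\tau_j(1)},\ldots,a_{\tau_j(n)})$). Nonnegative means entrywise nonnegative. *)

(* Defs.v *)
From HB Require Import structures.
From mathcomp Require Import all_boot all_order all_algebra all_fingroup.
From mathcomp Require Import all_classical all_reals.
From mathcomp Require Import trigo.
From mathcomp Require Import complex.
Set Implicit Arguments. Unset Strict Implicit. Unset Printing Implicit Defensive.
Import Order.TTheory GRing.Theory Num.Theory.
Local Open Scope ring_scope.

Notation Cx R := (complex.complex R).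

Definition rC {R : realType} (x : R) : Cx R := complex.Complex x 0.

(* circulant matrix with first row r: row i is r shifted cyclically i places
   to the right, i.e. entry (i,j) is r_{(j - i) mod n} (0-based indices). *)
Definition circulant {R : pzRingType} (n : nat) (r : 'I_n.+1 -> R) : 'M[R]_n.+1 :=
  \matrix_(i < n.+1, j < n.+1) r (inZp (j + (n.+1 - i))).

Definition nonneg_mx {R : numDomainType} (p q : nat) (A : 'M[R]_(p, q)) : Prop :=
  forall i j, 0 <= A i j.

Definition permutative {R : pzRingType} (N : nat) (A : 'M[R]_N) : Prop :=
  exists (a : 'I_N -> R) (tau : 'I_N -> 'S_N),
    (forall i0 : 'I_N, val i0 = 0%N -> tau i0 = 1%g) /\
    forall i j, A i j = a (tau i j).

Definition omega {R : realType} (n : nat) : Cx R :=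
  complex.Complex (cos (2 * pi / n%:R)) (sin (2 * pi / n%:R)).

(* k-th eigenvalue (0-based k) of the circulant with first row r:
   lambda_{k+1} = sum_j r_{j+1} omega^(k j) *)
Definition circ_eig {R : realType} (n : nat) (r : 'I_n -> R) (k : 'I_n) : Cx R :=
  \sum_(j < n) rC (r j) * omega n ^+ (k * j).

(* perturbed spectrum sigma_{r,t}: add t at position 1 and eps*t at position
   m+2 (1-based), i.e. at 0-based indices 0 and m+1, with n = 2m+2. *)
Definition pert_spec {R : realType} (m : nat) (r : 'I_(m.*2.+2) -> R)
    (t eps : R) (k : 'I_(m.*2.+2)) : Cx R :=
  circ_eig r k + (if val k == 0%N then rC t else 0)
               + (if val k == m.+1 then rC (eps * t) else 0).

Definition has_spectrum {R : realType} (N : nat) (M : 'M[R]_N)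
    (mu : 'I_N -> Cx R) : Prop :=
  char_poly (map_mx (@rC R) M) = \prod_(k < N) ('X - (mu k)%:P).

(* Main.v *)
Require Import Defs.
From HB Require Import structures.
From mathcomp Require Import all_boot all_order all_algebra all_fingroup.
From mathcomp Require Import all_classical all_reals.
From mathcomp Require Import trigo.
From mathcomp Require Import complex.
From mathcomp Require Import ring lra zify.
Import Order.TTheory GRing.Theory Num.Theory.
Local Open Scope ring_scope.

Section Om.
Variable R : realType.

Lemma rCE (x : R) : rC x = (x%:C)%C. Proof. by []. Qed.

Lemma omegaX (n k : nat) : omega n ^+ k =
  Complex (cos (k%:R * (2 * pi / n%:R))) (sin (k%:R * (2 * pi / n%:R))) :> Cx R.
Proof.
elim: k => [|k IH]; first by rewrite expr0 mul0r cos0 sin0.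
rewrite exprS IH /omega.
set a := 2 * pi / n%:R.
rewrite -[Complex _ _ * Complex _ _]/(Complex _ _).
by rewrite -addn1 natrD mulrDl mul1r cosD sinD addrC; congr Complex; ring.
Qed.

Lemma omega_n (n : nat) : (0 < n)%N -> omega n ^+ n = 1 :> Cx R.
Proof.
move=> n0; rewrite omegaX mulrCA divff ?pnatr_eq0 -?lt0n // mulr1.
by rewrite mulr_natl cos2pi sin2pi.
Qed.

Lemma omega_half (m : nat) : omega (m.*2.+2) ^+ m.+1 = -1 :> Cx R.
Proof.
rewrite omegaX.
have -> : (m.+1)%:R * (2 * pi / (m.*2.+2)%:R) = pi :> R.
  have h : (m.*2.+2)%:R = 2 * (m.+1)%:R :> R.
    by rewrite -natrM mul2n doubleS.
  rewrite h; field.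
  by rewrite addrC natr1 pnatr_eq0.
rewrite (cospi R) (sinpi R); by apply/eqP; rewrite eq_complex /= oppr0 !eqxx.
Qed.

Lemma omega_neq1 (n k : nat) : (0 < k < n)%N -> omega n ^+ k != 1 :> Cx R.
Proof.
case/andP=> k0 kn; rewrite omegaX; apply/negP => /eqP [hc hs].
pose y : R := k%:R * pi / n%:R.
have hy : k%:R * (2 * pi / n%:R) = y *+ 2.
  by rewrite /y -mulr_natr; ring.
have n0 : (0 < n)%N by apply: leq_trans kn.
have y0 : 0 < y < pi.
  apply/andP; split.
    by rewrite /y divr_gt0 ?mulr_gt0 ?ltr0n ?pi_gt0.
  rewrite /y ltr_pdivrMr ?ltr0n // mulrC ltr_pM2l ?pi_gt0 // ltr_nat //.
move: hc; rewrite hy cos_mulr2n => hc.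
have : `|cos y| = 1.
  have h2 : cos y ^+ 2 = 1 by move: hc; set u := cos y ^+ 2; lra.
  by move/eqP: h2; rewrite sqrf_eq1 => /orP [/eqP -> | /eqP ->]; rewrite ?normrN normr1.
move/cos1sin0 => hs0.
by move: (sin_gt0_pi y0); rewrite hs0 ltxx.
Qed.

Lemma omega_prim (n : nat) : (0 < n)%N -> n.-primitive_root (omega n : Cx R).
Proof.
move=> n0; have [m' pm mn] := prim_order_exists n0 (omega_n n n0).
have m0 := prim_order_gt0 pm.
suff e : m' = n by move: pm; rewrite e.
apply/eqP; rewrite eqn_leq dvdn_leq //= leqNgt; apply/negP => mn'.
by move: (omega_neq1 n m'); rewrite m0 mn' (prim_expr_order pm) eqxx => /(_ isT).
Qed.

End Om.
Lemma circ_entry (R : pzRingType) (N : nat) (r : 'I_N.+1 -> R) i j :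
  circulant r i j = r (j - i).
Proof. rewrite mxE; congr r; apply: val_inj => /=; by rewrite modnDmr. Qed.

Lemma geom_sum (F : fieldType) (n : nat) (x : F) : x ^+ n = 1 ->
  \sum_(j < n) x ^+ j = if x == 1 then n%:R else 0.
Proof.
move=> xn; case: eqP => [->|/eqP x1].
  by rewrite (eq_bigr (fun _ => 1)) ?sumr_const ?card_ord // => j _; rewrite expr1n.
have : (x - 1) * \sum_(j < n) x ^+ j = 0 by rewrite -subrX1 xn subrr.
by move/eqP; rewrite mulf_eq0 subr_eq0 (negbTE x1) /= => /eqP.
Qed.

Lemma charpoly_sim (F : fieldType) (n : nat) (A D W : 'M[F]_n) :
  W \in unitmx -> A *m W = W *m D -> char_poly A = char_poly D.
Proof.
move=> Wu AW.
pose Wp := map_mx (@polyC F) W.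
have e : char_poly_mx A *m Wp = Wp *m char_poly_mx D.
  rewrite /char_poly_mx mulmxBl mulmxBr mul_scalar_mx mul_mx_scalar.
  by rewrite /Wp -!map_mxM AW.
have dW : \det Wp != 0.
  rewrite /Wp det_map_mx polyC_eq0.
  by move: Wu; rewrite unitmxE unitfE.
apply: (mulIf dW).
by rewrite /char_poly -!det_mulmx e !det_mulmx mulrC.
Qed.

Section Mx.
Variables (F : fieldType) (N : nat) (w : F).
Hypothesis wp : N.+1.-primitive_root w.
Hypothesis nF : N.+1%:R != 0 :> F.

Definition Vm : 'M[F]_N.+1 := \matrix_(i, k) w ^+ (i * k).
Definition eigv (r : 'I_N.+1 -> F) (k : 'I_N.+1) :=
  \sum_(j < N.+1) r j * w ^+ (k * j).

Lemma circ_mulV r : circulant r *m Vm = Vm *m diag_mx (\row_k eigv r k).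
Proof.
apply/matrixP => i k; rewrite mul_mx_diag !mxE /eigv.
under eq_bigr do rewrite circ_entry mxE.
rewrite (reindex_inj (addIr i)) /= mulr_sumr; apply: eq_bigr => l _.
rewrite addrK mulrCA; congr (_ * _).
rewrite /= exprM prim_expr_mod // -exprM mulnDl exprD mulrC; congr (_ * _).
by rewrite mulnC.
Qed.

Lemma Vm_unit : Vm \in unitmx.
Proof.
pose Vi : 'M[F]_N.+1 := (N.+1%:R)^-1 *: \matrix_(i, k) (w ^+ (i * k))^-1.
have w0 : w != 0 by rewrite (prim_root_eq0 wp).
suff : Vm *m Vi = 1%:M by case/mulmx1_unit.
apply/matrixP => i k; rewrite /Vi -scalemxAr !mxE.
under eq_bigr do rewrite !mxE.
have -> : \sum_(j < N.+1) w ^+ (i * j) * (w ^+ (j * k))^-1 = \sum_(j < N.+1) (w ^+ i / w ^+ k) ^+ j.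
  apply: eq_bigr => j _; rewrite exprMn exprVn -!exprM mulnC [(j * k)%N]mulnC //.
rewrite geom_sum; last first.
  rewrite exprMn exprVn -!exprM ![(_ * N.+1)%N]mulnC !exprM !(prim_expr_order wp).
  by rewrite !expr1n invr1 mulr1.
case: (eqVneq i k) => [->|ik].
  by rewrite divff ?expf_neq0 // eqxx mulVf.
have -> : (w ^+ i / w ^+ k == 1) = false.
  apply/negbTE; rewrite (can2_eq (divfK _) (mulfK _)) ?expf_neq0 // mul1r.
  rewrite (eq_prim_root_expr wp) !modn_small //.
by rewrite mulr0.
Qed.

End Mx.

Definition pvec {R : realType} (m : nat) (t eps : R) (j : 'I_(m.*2.+2)) : R :=
  t / (m.*2.+2)%:R * (1 + eps * (-1) ^+ j).

Lemma circ_eig_ext (R : realType) n (r1 r2 : 'I_n -> R) k :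
  (forall j, r1 j = r2 j) -> circ_eig r1 k = circ_eig r2 k.
Proof. by move=> e; apply: eq_bigr => j _; rewrite e. Qed.

Lemma circ_eigD (R : realType) n (r1 r2 : 'I_n -> R) k :
  circ_eig (fun j => r1 j + r2 j) k = circ_eig r1 k + circ_eig r2 k.
Proof.
by rewrite /circ_eig -big_split /=; apply: eq_bigr => j _; rewrite !rCE rmorphD mulrDl.
Qed.

Lemma circ_eigB (R : realType) n (r1 r2 : 'I_n -> R) k :
  circ_eig (fun j => r1 j - r2 j) k = circ_eig r1 k - circ_eig r2 k.
Proof.
rewrite /circ_eig -sumrB /=; apply: eq_bigr => j _.
by rewrite !rCE rmorphB mulrBl.
Qed.

Lemma dvd_small n k : (k < n)%N -> (n %| k)%N = (k == 0)%N.
Proof.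
case: k => [|k] kn; first by rewrite dvdn0.
by apply/negbTE; apply/negP => /dvdn_leq => /(_ isT); rewrite leqNgt kn.
Qed.

Lemma dvd_half m k : (k < m.*2.+2)%N -> (m.*2.+2 %| k + m.+1)%N = (k == m.+1).
Proof.
move=> km; apply/idP/eqP => [/dvdnP [q hq]|->].
  have : (0 < q < 2)%N.
    apply/andP; split.
      by case: q hq => //= hq; rewrite addnS in hq.
    rewrite ltnNge; apply/negP => q2.
    have : (2 * m.*2.+2 <= q * m.*2.+2)%N by rewrite leq_mul2r q2 orbT.
    rewrite -hq -muln2 ; lia.
  case: q hq => [|[|q]] //= hq _.
  rewrite mul1n in hq; lia.
by rewrite addnn doubleS dvdnn.
Qed.
Lemma rCM (R : realType) (x y : R) : rC (x * y) = rC x * rC y.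
Proof. by rewrite !rCE rmorphM. Qed.
Lemma rCD (R : realType) (x y : R) : rC (x + y) = rC x + rC y.
Proof. by rewrite !rCE rmorphD. Qed.
Lemma rC1 (R : realType) : rC (1 : R) = 1.
Proof. by rewrite !rCE rmorph1. Qed.

Lemma circ_eig_p (R : realType) m (t eps : R) (k : 'I_(m.*2.+2)) :
  circ_eig (pvec m t eps) k =
    (if val k == 0%N then rC t else 0) + (if val k == m.+1 then rC (eps * t) else 0).
Proof.
have n0 : (0 < m.*2.+2)%N by [].
have wp := @omega_prim R _ n0.
pose w : Cx R := omega (m.*2.+2).
pose c : Cx R := rC (t / (m.*2.+2)%:R).
have e : forall j : 'I_(m.*2.+2), rC (pvec m t eps j) * w ^+ (k * j) =
    c * (w ^+ k) ^+ j + c * rC eps * (w ^+ (k + m.+1)) ^+ j.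
  move=> j; rewrite /pvec /c; set u := t / _.
  have hs : rC ((-1) ^+ j : R) = (w ^+ m.+1) ^+ j.
    by rewrite (omega_half R m) rCE rmorphXn rmorphN1.
  rewrite (rCM R u) rCD rC1 rCM hs -/c.
  rewrite exprD exprMn -!exprM.
  ring.
have hn : ((m.*2.+2)%:R : Cx R) = rC (m.*2.+2)%:R by rewrite rCE rmorph_nat.
have hc : c * (m.*2.+2)%:R = rC t by rewrite hn /c !rCE -rmorphM divfK // pnatr_eq0.
rewrite /circ_eig (eq_bigr _ (fun j _ => e j)) big_split /= -!mulr_sumr !geom_sum;
  last 2 first.
- by rewrite -exprM mulnC exprM (prim_expr_order wp) expr1n.
- by rewrite -exprM mulnC exprM (prim_expr_order wp) expr1n.
rewrite -!(prim_order_dvd wp) dvd_small // dvd_half //.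
case: eqP => [k0|_]; case: eqP => [km|_].
- by move: km; rewrite k0; lia.
- by rewrite mulr0 !addr0 hc.
- by rewrite mulr0 !add0r -mulrA [rC eps * _]mulrC mulrA hc rCM mulrC.
- by rewrite !mulr0 addr0.
Qed.

Section Perm.
Variable N : nat.
Local Notation I := 'I_N.+1.

Definition hsw (sw : bool) (k : I) (x : I + I) : I + I :=
  match x with
  | inl l => if sw then inr (l - k) else inl (l - k)
  | inr l => if sw then inl (l - k) else inr (l - k)
  end.

Lemma hsw_inj sw k : injective (hsw sw k).
Proof.
have H (l l' : I) : l - k = l' - k -> l = l'.
  by move/(congr1 (fun z => z + k)); rewrite !subrK.
pose sv (x : I + I) := match x with inl a => a | inr a => a end.
by case: sw => -[l|l] [l'|l'] //= e; move/(congr1 sv): e => /= /H ->.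
Qed.

Definition rowsel (x : I + I) := match x with inl k => hsw false k | inr k => hsw true k end.

Definition taufun (i j : 'I_(N.+1 + N.+1)) : 'I_(N.+1 + N.+1) :=
  unsplit (rowsel (fintype.split i) (fintype.split j)).

Lemma taufun_inj i : injective (taufun i).
Proof.
move=> j j' /(can_inj unsplitK) h.
apply: (can_inj splitK).
by move: h; case: (fintype.split i) => k /= /hsw_inj.
Qed.

Definition tau i : 'S_(N.+1 + N.+1) := perm (@taufun_inj i).

Lemma tau0 i0 : val i0 = 0%N -> tau i0 = 1%g.
Proof.
move=> h0; have -> : i0 = lshift _ (ord0 : I) by apply: val_inj.
apply/permP => j; rewrite permE perm1 /taufun -[lshift _ _]/(unsplit (inl (ord0 : I))) unsplitK /=.
rewrite -[in RHS](splitK j); case: (fintype.split j) => l /=; by rewrite subr0.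
Qed.

End Perm.

Lemma mxaddE (R : realType) n (A B : 'M[R]_n) i j : (A + B) i j = A i j + B i j.
Proof. by rewrite !mxE. Qed.
Lemma mxsubE (R : realType) n (A B : 'M[R]_n) i j : (A - B) i j = A i j - B i j.
Proof. by rewrite !mxE. Qed.

Theorem theorem9 (R : realType) (m : nat) (s c : 'I_(m.*2.+2) -> R)
    (t1 t2 eps : R) :
  nonneg_mx (circulant s) ->
  nonneg_mx (circulant s + circulant c) ->
  nonneg_mx (circulant s - circulant c) ->
  `|t2| <= t1 ->
  (eps = 1 \/ eps = -1) ->
  exists M : 'M[R]_(m.*2.+2 + m.*2.+2),
    nonneg_mx M /\ permutative M /\
    has_spectrum M
      (fun k => match fintype.split k with
                | inl k1 => pert_spec s t1 eps k1
                | inr k2 => pert_spec c t2 eps k2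
                end).
Proof.
move=> Hs Hp Hm ht heps.
pose p1 := pvec m t1 eps; pose p2 := pvec m t2 eps.
pose a j := (s j + c j + (p1 j + p2 j)) / 2.
pose b j := (s j - c j + (p1 j - p2 j)) / 2.
have sgn : forall j : 'I_(m.*2.+2), 0 <= 1 + eps * (-1) ^+ j.
  move=> j; rewrite -signr_odd; case: heps => ->; case: (odd j) => /=;
  rewrite ?expr1 ?expr0; lra.
have t12 : -t1 <= t2 <= t1 by rewrite -ler_norml.
have hsc j : 0 <= s j + c j.
  by move: (Hp ord0 j); rewrite mxaddE !circ_entry subr0.
have hsc' j : 0 <= s j - c j.
  by move: (Hm ord0 j); rewrite mxsubE !circ_entry subr0.
have hp j : 0 <= p1 j + p2 j.
  rewrite /p1 /p2 /pvec -mulrDl; apply: mulr_ge0; last exact: sgn.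
  rewrite -mulrDl divr_ge0 //; lra.
have hp' j : 0 <= p1 j - p2 j.
  rewrite /p1 /p2 /pvec -mulrBl; apply: mulr_ge0; last exact: sgn.
  rewrite -mulrBl divr_ge0 //; lra.
have ha j : 0 <= a j by rewrite /a divr_ge0 // addr_ge0.
have hb j : 0 <= b j by rewrite /b divr_ge0 // addr_ge0.
pose M := block_mx (circulant a) (circulant b) (circulant b) (circulant a).
exists M; split; [|split].
- move=> i j; rewrite /M -(splitK i) -(splitK j).
  case: (fintype.split i) => k; case: (fintype.split j) => l;
  rewrite /= ?block_mxEul ?block_mxEur ?block_mxEdl ?block_mxEdr circ_entry //.
- pose avec j := match fintype.split j with inl l => a l | inr l => b l end.
  exists avec, (@tau (m.*2.+1)); split; first exact: tau0.
  move=> i j; rewrite permE /taufun.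
  rewrite -[in LHS](splitK i) -[in LHS](splitK j).
  case: (fintype.split i) => k; case: (fintype.split j) => l;
  rewrite /avec unsplitK /= ?block_mxEul ?block_mxEur ?block_mxEdl ?block_mxEdr circ_entry //.
rewrite /has_spectrum.
pose w : Cx R := omega (m.*2.+2).
have wp : (m.*2.+1).+1.-primitive_root w := @omega_prim R (m.*2.+2) isT.
have nF : (m.*2.+1).+1%:R != 0 :> Cx R by rewrite pnatr_eq0.
pose V := @Vm _ (m.*2.+1) w.
pose ra j := rC (a j); pose rb j := rC (b j).
pose ea := \row_k @eigv _ (m.*2.+1) w ra k.
pose eb := \row_k @eigv _ (m.*2.+1) w rb k.
have eMc : map_mx rC M = block_mx (circulant ra) (circulant rb) (circulant rb) (circulant ra).
  by rewrite map_block_mx; congr block_mx; apply/matrixP => i j; rewrite !mxE.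
pose d1 := \row_k (@eigv _ (m.*2.+1) w ra k + @eigv _ (m.*2.+1) w rb k).
pose d2 := \row_k (@eigv _ (m.*2.+1) w ra k - @eigv _ (m.*2.+1) w rb k).
pose W := block_mx V V V (-V).
have hA : circulant ra *m V = V *m diag_mx ea := @circ_mulV _ _ _ wp ra.
have hB : circulant rb *m V = V *m diag_mx eb := @circ_mulV _ _ _ wp rb.
have Vu : V \in unitmx := @Vm_unit _ _ _ wp nF.
have h2 : (2^-1 : Cx R) + 2^-1 = 1.
  have n2 : (2 : Cx R) != 0 by rewrite pnatr_eq0.
  by field.
have Wu : W \in unitmx.
  pose X := (2^-1 : Cx R) *: invmx V.
  suff : W *m block_mx X X X (-X) = 1%:M by case/mulmx1_unit.
  have VX : V *m X = (2^-1 : Cx R)%:M by rewrite /X -scalemxAr mulmxV // scalemx1.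
  rewrite mulmx_block !mulmxN !mulNmx opprK VX subrr (scalar_mx_block (m.*2.+2) (m.*2.+2)).
  have -> : (2^-1 : Cx R)%:M + (2^-1)%:M = 1%:M :> 'M_(m.*2.+2).
    by apply/matrixP => i j; rewrite !mxE -mulrnDl h2.
  by [].
have D1 : diag_mx d1 = diag_mx ea + diag_mx eb.
  by apply/matrixP => i j; rewrite !mxE mulrnDl.
have D2 : diag_mx d2 = diag_mx ea - diag_mx eb.
  by apply/matrixP => i j; rewrite !mxE mulrnBl.
have eq : map_mx rC M *m W = W *m diag_mx (row_mx d1 d2).
  rewrite eMc diag_mx_row !mulmx_block !mulmxN !mulNmx !mulmx0 hA hB D1 D2.
  rewrite mulmxDr mulmxBr !addr0 !add0r opprB !subr0.
  by rewrite [V *m diag_mx eb + _]addrC.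
rewrite (@charpoly_sim _ _ _ _ _ Wu eq) char_poly_trig ?diag_mx_is_trig //.
apply: eq_bigr => k _; rewrite mxE eqxx mulr1n mxE.
case: (fintype.split k) => l; rewrite mxE.
- have -> : @eigv _ (m.*2.+1) w ra l + @eigv _ (m.*2.+1) w rb l = circ_eig a l + circ_eig b l by [].
  rewrite -circ_eigD (@circ_eig_ext _ _ _ (fun j => s j + p1 j)); last first.
    by move=> j; rewrite /a /b; field.
  by rewrite circ_eigD circ_eig_p /pert_spec addrA.
- have -> : @eigv _ (m.*2.+1) w ra l - @eigv _ (m.*2.+1) w rb l = circ_eig a l - circ_eig b l by [].
  rewrite -circ_eigB (@circ_eig_ext _ _ _ (fun j => c j + p2 j)); last first.
    by move=> j; rewrite /a /b; field.
  by rewrite circ_eigD circ_eig_p /pert_spec addrA.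
Qed.
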